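(* Let $R$ be an integral domain; if $R=\bigoplus_{i\ge0}[R]_i$ is graded, assume $[R]_1\neq0$. Let $A=\begin{pmatrix}a&\mathfrak b\\ \mathfrak c&A'\end{pmatrix}\in R^{n,n}$ with $a\in R$, $\mathfrak b$ a row vector and $\mathfrak c$ a column vector in $R^{n-1}$, and $A'\in R^{n-1,n-1}$. If $\det A$, $\det A'$, $\mathfrak b$ and $\mathfrak c$ are all non-zero, then $A$ is linked to a block diagonal matrix $\begin{pmatrix}b&0\\0&B'\end{pmatrix}$ with $b\in R$, $B'\in R^{n-1,n-1}$. If $R$ is graded and $A$ is homogeneous, this block diagonal matrix can be taken homogeneous.
   Context: $R^{n,n}$ denotes the $n\times n$ matrices over $R$ and $B^t$ the transpose. Two matrices are equivalent if one equals $PAQ$ with $P,Q$ invertible. Matrices $A,B\in R^{n,n}$ are linked in one step if $A\cdot B^t$ is equivalent to a symmetric matrix whose determinant is a non-zero divisor of $R$; $A,B$ are linked if there is a chain $A=A_0,A_1,\dots,A_v=B$ with $A_i$ linked in one step to $A_{i+1}$ for all $i$, where in the graded case all $A_i$ are required to be homogeneous, i.e. to represent degree-preserving homomorphisms between graded free $R$-modules. *)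

(* Defs.v *)
From mathcomp Require Import all_boot all_order all_algebra.
Set Implicit Arguments. Unset Strict Implicit. Unset Printing Implicit Defensive.
Import GRing.Theory Num.Theory.
Local Open Scope ring_scope.

Definition nonzerodivisor (R : comPzRingType) (x : R) : Prop :=
  forall y : R, y * x = 0 -> y = 0.

Definition mx_equiv (R : comUnitRingType) (m : nat) (A B : 'M[R]_m) : Prop :=
  exists P Q : 'M[R]_m, [/\ P \in unitmx, Q \in unitmx & B = P *m A *m Q].

Definition linked1 (R : comUnitRingType) (m : nat) (A B : 'M[R]_m) : Prop :=
  exists S : 'M[R]_m, [/\ S^T = S, nonzerodivisor (\det S) & mx_equiv (A *m B^T) S].

(* Chains A = A_0, ..., A_v = B of one-step links, all A_i satisfying P
   (P = always True in the ungraded case, P = homogeneity in the graded case). *)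
Inductive linked_in (R : comUnitRingType) (m : nat) (P : 'M[R]_m -> Prop)
  : 'M[R]_m -> 'M[R]_m -> Prop :=
| linked_refl A : P A -> linked_in P A A
| linked_step A A1 B : P A -> linked1 A A1 -> linked_in P A1 B -> linked_in P A B.

Definition linked (R : comUnitRingType) (m : nat) (A B : 'M[R]_m) : Prop :=
  linked_in (fun _ => True) A B.

(* G i = the i-th homogeneous component [R]_i of a grading R = (+)_{i>=0} [R]_i. *)
Definition is_grading (R : comPzRingType) (G : nat -> R -> Prop) : Prop :=
  [/\ (forall i, G i 0),
      (forall i x y, G i x -> G i y -> G i (x - y)),
      (forall i j x y, G i x -> G j y -> G (i + j)%N (x * y)),
      (forall x : R, exists (N : nat) (f : nat -> R),
          (forall i, G i (f i)) /\ x = \sum_(i < N) f i)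
    & (forall (N : nat) (f : nat -> R), (forall i, G i (f i)) ->
          \sum_(i < N) f i = 0 -> forall i, (i < N)%N -> f i = 0)].

(* A homogeneous matrix: it represents a degree-preserving homomorphism
   (+)_j R(-e_j) -> (+)_i R(-d_i), i.e. each entry A i j is 0 or homogeneous
   of degree e_j - d_i. *)
Definition homogeneous_mx (R : comPzRingType) (G : nat -> R -> Prop) (m : nat)
  (A : 'M[R]_m) : Prop :=
  exists d e : 'I_m -> int, forall i j,
    A i j = 0 \/ exists k : nat, (e j - d i = k%:Z)%R /\ G k (A i j).

(* Main.v *)
Require Import Defs.
From mathcomp Require Import all_boot all_order all_algebra.
From mathcomp Require Import zify fingroup perm.
Set Implicit Arguments. Unset Strict Implicit. Unset Printing Implicit Defensive.
Import GRing.Theory Num.Theory.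
Local Open Scope ring_scope.

Lemma nzd_idom (R : idomainType) (x : R) : x != 0 -> nonzerodivisor x.
Proof. by move=> nx y /eqP; rewrite mulf_eq0 (negPf nx) orbF => /eqP. Qed.

Lemma link_PXA (R : idomainType) n (Pr : 'M[R]_n -> Prop) (A P X B : 'M[R]_n) :
  \det A != 0 -> P \in unitmx -> X^T = X -> \det X != 0 ->
  Pr A -> Pr (\adj A)^T -> linked_in Pr (P *m X *m A) B -> linked_in Pr A B.
Proof.
move=> dA uP sX dX PA PC HB.
have dP : \det P != 0 by apply/eqP => h; move: uP; rewrite unitmxE h unitr0.
apply: (linked_step PA _ (linked_step PC _ HB)).
  exists (\det A)%:M; split; first by rewrite tr_scalar_mx.
    by apply: nzd_idom; rewrite det_scalar expf_neq0.
  exists 1%:M, 1%:M; split; rewrite ?unitmx1 //.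
  by rewrite mul1mx mulmx1 trmxK mul_mx_adj.
exists (\det A *: (P *m X *m P^T)); split.
- by rewrite linearZ /= !trmx_mul trmxK sX mulmxA.
- by apply: nzd_idom; rewrite detZ !det_mulmx det_tr !mulf_neq0 // expf_neq0.
- exists P, 1%:M; split; rewrite ?unitmx1 //.
  rewrite mulmx1 !trmx_mul sX (mulmxA (\adj A)^T) -trmx_mul mul_mx_adj tr_scalar_mx.
  by rewrite mul_scalar_mx -scalemxAr mulmxA.
Qed.
Section Grad.
Variables (R : idomainType) (G : nat -> R -> Prop).
Hypothesis HG : is_grading G.

Lemma G0 k : G k 0. Proof. by case: HG. Qed.
Lemma Gsub k x y : G k x -> G k y -> G k (x - y). Proof. by case: HG => _ H _ _ _; apply: H. Qed.
Lemma Gmul i j x y : G i x -> G j y -> G (i + j)%N (x * y). Proof. by case: HG => _ _ H _ _; apply: H. Qed.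
Lemma Gopp k x : G k x -> G k (- x).
Proof. by move=> Hx; rewrite -sub0r; apply: Gsub => //; apply: G0. Qed.
Lemma Gadd k x y : G k x -> G k y -> G k (x + y).
Proof. by move=> Hx Hy; rewrite -[y]opprK; apply: Gsub => //; apply: Gopp. Qed.
Lemma Gsign k p x : G k x -> G k ((-1) ^+ p * x).
Proof.
move=> Hx; rewrite -signr_odd; case: (odd p); rewrite ?expr1 ?expr0 ?mulN1r ?mul1r //.
exact: Gopp.
Qed.

Definition hom0 (x : R) (dg : int) := x = 0 \/ exists k : nat, dg = k%:Z /\ G k x.

Lemma hom_prod n (F : 'I_n -> R) (dg : 'I_n -> int) : (0 < n)%N ->
  (forall i, hom0 (F i) (dg i)) -> hom0 (\prod_i F i) (\sum_i dg i).
Proof.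
case: n F dg => [//|n] F dg _; elim: n F dg => [|n IH] F dg H.
  by rewrite !big_ord1; apply: H.
rewrite big_ord_recl [X in hom0 _ X]big_ord_recl.
case: (H ord0) => [->|[k0 [Hk0 G0k]]]; first by left; rewrite mul0r.
case: (IH (fun i => F (lift ord0 i)) (fun i => dg (lift ord0 i)) (fun i => H _)) =>
  [->|[k1 [Hk1 G1k]]]; first by left; rewrite mulr0.
right; exists (k0 + k1)%N; split; first by rewrite Hk0 Hk1 PoszD.
exact: Gmul.
Qed.

Lemma hom_det n (M : 'M[R]_n) (d e : 'I_n -> int) : (0 < n)%N ->
  (forall i j, hom0 (M i j) (e j - d i)) ->
  hom0 (\det M) (\sum_i e i - \sum_i d i).
Proof.
move=> n0 H.
have Hs : forall s : 'S_n, hom0 (\prod_i M i (s i)) (\sum_i e i - \sum_i d i).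
  move=> s; have -> : \sum_i e i = \sum_i e (s i) by rewrite (reindex_inj (@perm_inj _ s)).
  rewrite -sumrB; apply: hom_prod => // i; exact: H.
case HE: (\sum_i e i - \sum_i d i) => [K|K].
  right; exists K; split => //; rewrite /determinant.
  apply: (big_ind (G K)); [exact: G0|exact: Gadd|] => s _.
  case: (Hs s) => [->|[k [Hk Gk]]]; first by rewrite mulr0; apply: G0.
  by move: Hk; rewrite HE => -[->]; apply: Gsign.
left; rewrite /determinant big1 // => s _.
by case: (Hs s) => [->|[k [Hk _]]]; [rewrite mulr0|rewrite HE in Hk].
Qed.

Lemma hom_mxP n (M : 'M[R]_n) :
  homogeneous_mx G M <-> exists d e : 'I_n -> int, forall i j, hom0 (M i j) (e j - d i).
Proof.
split=> -[d [e H]]; exists d, e => i j; case: (H i j) => [->|[k [Hk Gk]]];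
  by [left| right; exists k].
Qed.

Lemma hom_adj n (M : 'M[R]_n) : (1 < n)%N ->
  homogeneous_mx G M -> homogeneous_mx G (\adj M)^T.
Proof.
move=> n1 /hom_mxP [d [e H]]; apply/hom_mxP.
exists (fun i => - d i), (fun j => (\sum_i e i - \sum_i d i) - e j) => i j.
rewrite !mxE /cofactor.
have := @hom_det _ (row' i (col' j M)) (fun k => d (lift i k)) (fun l => e (lift j l)).
case=> [|k l|->|[k [Hk Gk]]].
- by rewrite -subn1 subn_gt0.
- by rewrite !mxE; apply: H.
- by left; rewrite mulr0.
right; exists k; split; last exact: Gsign.
rewrite (bigD1_ord j (P:=xpredT) (F:=e)) // (bigD1_ord i (P:=xpredT) (F:=d)) //= -Hk.
rewrite opprK.
suff -> : forall (p q x y : int), p + x - (q + y) - p + q = x - y by [].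
by move=> p q x y; lia.
Qed.
End Grad.

Lemma splitI m (i : 'I_(1 + m)) : i = lshift m ord0 \/ exists k, i = rshift 1 k.
Proof.
case: (splitP i) => [j Hj|k Hk]; [left|right; exists k]; apply/val_inj => //=.
by rewrite Hj (ord1 j).
Qed.

Theorem lemma7p6 (R : idomainType) (n' : nat) (a : R) (b : 'rV[R]_n')
  (c : 'cV[R]_n') (A' : 'M[R]_n') :
  \det (block_mx (a%:M : 'M_1) b c A') != 0 -> \det A' != 0 -> b != 0 -> c != 0 ->
  (exists (b0 : R) (B' : 'M[R]_n'),
      linked (block_mx (a%:M : 'M_1) b c A') (block_mx (b0%:M : 'M_1) 0 0 B'))
  /\
  (forall G : nat -> R -> Prop, is_grading G -> (exists x, G 1%N x /\ x != 0) ->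
     homogeneous_mx G (block_mx (a%:M : 'M_1) b c A') ->
     exists (b0 : R) (B' : 'M[R]_n'),
       homogeneous_mx G (block_mx (b0%:M : 'M_1) 0 0 B') /\
       linked_in (@homogeneous_mx R G (1 + n')%N) (block_mx (a%:M : 'M_1) b c A') (block_mx (b0%:M : 'M_1) 0 0 B')).
Proof.
move=> dA dA' b0 c0.
have m0 : (0 < n')%N.
  case: n' a b c A' dA dA' b0 c0 => // a b c A' _ _ /negP [].
  by rewrite thinmx0.
set A := block_mx (a%:M : 'M_1) b c A'.
pose Dl := \det A'.
pose z := b *m \adj A'.
pose P1 := block_mx (1%:M : 'M_1) (-z) 0 (1%:M : 'M_n').
pose L1 := block_mx (Dl%:M : 'M_1) 0 0 (1%:M : 'M_n').
pose s1 := (Dl%:M *m a%:M - z *m c : 'M_1).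
pose sg := s1 0 0.
pose D1 := block_mx (sg%:M : 'M_1) 0 c A'.
pose P2 := block_mx (1%:M : 'M_1) 0 (-c) (1%:M : 'M_n').
pose L2 := block_mx (1%:M : 'M_1) 0 0 (sg%:M : 'M_n').
pose D := block_mx (sg%:M : 'M_1) 0 0 (sg *: A').
have D1E : P1 *m L1 *m A = D1.
  rewrite /P1 /L1 /A /D1 !mulmx_block !mulmx1 !mul0mx !mulmx0 !addr0 !sub0r !add0r !mul1mx.
  congr (block_mx _ _ _ _); rewrite ?mul0mx ?add0r //.
    by rewrite /sg -mx11_scalar /s1 mulNmx.
  by rewrite /z mulNmx -mulmxA mul_adj_mx scalar_mxC !mul_scalar_mx subrr.
have sgE : sg = \det A.
  apply: (mulIf dA').
  have := congr1 determinant D1E.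
  rewrite !det_mulmx /P1 /L1 det_ublock det_ublock !det1 det_scalar1 mul1r mulr1.
  by rewrite /D1 det_lblock det_scalar1 mul1r mulrC => <-.
have DE : P2 *m L2 *m D1 = D.
  rewrite /P2 /L2 /D1 /D !mulmx_block !mulmx1 !mul0mx !mulmx0 !addr0 !add0r !mul1mx.
  rewrite (mul0mx 1 c) (mul0mx 1 A') addr0.
  congr (block_mx _ _ _ _).
    by rewrite mulNmx scalar_mxC mul_scalar_mx addNr.
  by rewrite mul_scalar_mx.
have sg0 : sg != 0 by rewrite sgE.
have dD1 : \det D1 != 0 by rewrite /D1 det_lblock det_scalar1 mulf_neq0.
have uP1 : P1 \in unitmx by rewrite unitmxE /P1 det_ublock !det1 mulr1 unitr1.
have uP2 : P2 \in unitmx by rewrite unitmxE /P2 det_lblock !det1 mulr1 unitr1.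
have sL1 : L1^T = L1 by rewrite /L1 tr_block_mx !trmx0 !tr_scalar_mx.
have sL2 : L2^T = L2 by rewrite /L2 tr_block_mx !trmx0 !tr_scalar_mx.
have dL1 : \det L1 != 0 by rewrite /L1 det_ublock det_scalar1 det1 mulr1.
have dL2 : \det L2 != 0 by rewrite /L2 det_ublock det1 det_scalar mul1r expf_neq0.
have chain : forall Pr : 'M[R]_(1 + n') -> Prop, Pr A -> Pr (\adj A)^T -> Pr D1 ->
    Pr (\adj D1)^T -> Pr D -> linked_in Pr A D.
  move=> Pr h1 h2 h3 h4 h5; apply: (link_PXA dA uP1 sL1 dL1 h1 h2); rewrite D1E.
  apply: (link_PXA dD1 uP2 sL2 dL2 h3 h4); rewrite DE; exact: linked_refl.
split; first by exists sg, (sg *: A'); apply: chain.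
move=> G HG _ HA.
have n1 : (1 < 1 + n')%N by [].
have HA' := HA; move/hom_mxP: HA' => [d [e He]].
have [|[K [_ GK]]] := hom_det HG (ltn0Sn _) He; first by move/eqP; rewrite (negPf dA).
rewrite -sgE in GK.
have hD1 : homogeneous_mx G D1.
  apply/hom_mxP; exists (fun i => if (val i == 0)%N then e i - K%:Z else d i), e.
  move=> i j; case: (splitI i) => [->|[k ->]] /=.
    case: (splitI j) => [->|[l ->]].
      rewrite /D1 block_mxEul mxE eqxx mulr1n; right; exists K; split => //; lia.
    by rewrite /D1 block_mxEur mxE; left.
  have := He (rshift 1 k) j.
  by case: (splitI j) => [->|[l ->]]; rewrite /D1 /A ?block_mxEdl ?block_mxEdr.
have hD : homogeneous_mx G D.
  apply/hom_mxP; exists (fun i => if (val i == 0)%N then 0 else d i),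
    (fun j => if (val j == 0)%N then K%:Z else e j + K%:Z).
  move=> i j; case: (splitI i) => [->|[k ->]] /=;
    case: (splitI j) => [->|[l ->]] /=.
  - rewrite /D block_mxEul mxE eqxx mulr1n; right; exists K; split => //; lia.
  - by rewrite /D block_mxEur mxE; left.
  - by rewrite /D block_mxEdl mxE; left.
  - rewrite /D block_mxEdr mxE.
    have := He (rshift 1 k) (rshift 1 l); rewrite /A block_mxEdr.
    case=> [->|[k' [Hk' Gk']]]; first by left; rewrite mulr0.
    right; exists (K + k')%N; split; first by rewrite PoszD -Hk'; lia.
    exact: Gmul.
exists sg, (sg *: A'); split => //.
apply: chain => //; exact: hom_adj.
Qed.
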